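(* Let $n\ge d\ge 1$ and let $(A,C)$ be a real OTSON pair ($A$ is $n\times n$, $C$ is $d\times n$). Let $\{\tilde Q(\theta):\theta\in\Theta\}$ be an orthogonal reduction parameterization of $O(d+1)$ to $e_1$, and for $\theta\in\Theta$ and $1\le k\le n$ let $Q^{(k)}(\theta)$ be its embedding defined below. Then there exist $\theta_1,\dots,\theta_n\in\Theta$ such that $$\begin{pmatrix} C\\ A\end{pmatrix}=Q^{(n)}(\theta_n)Q^{(n-1)}(\theta_{n-1})\cdots Q^{(2)}(\theta_2)Q^{(1)}(\theta_1)\begin{pmatrix}\mathbb{I}_n\\ 0_{d,n}\end{pmatrix}.$$
   Context: ${}^*$ denotes transpose; $e_k$ is the $k$-th unit vector; $0_{a,b}$ is the $a\times b$ zero matrix. $(A,C)$ is OTSON if $A^*A=\mathbb{I}_n-C^*C$ and the $(n+d)\times n$ stack $Q=\begin{pmatrix} C\\ A\end{pmatrix}$ satisfies $Q_{i,j}=0$ for $j>i$. An orthogonal reduction parameterization (ORP) of $O(m)$ to $e_k$ is a family $\{\tilde Q(\theta):\theta\in\Theta\}$, $\Theta\subset\mathbb{R}^{m-1}$, of real orthogonal $m\times m$ matrices such that for every nonzero $h\in\mathbb{R}^m$ there is a unique $\theta(h)\in\Theta$ with $\tilde Q(\theta)^*h=\|h\|e_k$. For an ORP of $O(d+1)$ to $e_1$ write $\tilde Q(\theta)=\begin{pmatrix}\mu&y^*\\ x&\tilde O\end{pmatrix}$ with $\mu\in\mathbb{R}$, $x,y\in\mathbb{R}^d$, $\tilde O\in\mathbb{R}^{d\times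 d}$ (all depending on $\theta$). The embedding is the $(n+d)\times(n+d)$ matrix $$Q^{(k)}(\theta)=\mathbb{I}_{k-1}\oplus\begin{pmatrix}\mu&0_{1,n-k}&y^*\\ 0_{n-k,1}&\mathbb{I}_{n-k}&0_{n-k,d}\\ x&0_{d,n-k}&\tilde O\end{pmatrix}.$$ *)

(* Defs.v *)
From HB Require Import structures.
From mathcomp Require Import all_boot all_order all_algebra.
From mathcomp Require Import all_reals.
Set Implicit Arguments. Unset Strict Implicit. Unset Printing Implicit Defensive.
Import Order.TTheory GRing.Theory Num.Theory.
Local Open Scope ring_scope.

Definition vnorm (R : realType) (m : nat) (h : 'cV[R]_m) : R :=
  Num.sqrt (\sum_(i < m) h i 0 ^+ 2).

(* k-th unit column vector (0-based index k). *)
Definition unitv (R : realType) (m : nat) (k : 'I_m) : 'cV[R]_m :=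
  \col_(i < m) (i == k)%:R.

Definition OTSON (R : realType) (n d : nat) (A : 'M[R]_n) (C : 'M[R]_(d, n)) : Prop :=
  A^T *m A = 1%:M - C^T *m C /\
  (forall (i : 'I_(d + n)) (j : 'I_n), (i < j)%N -> col_mx C A i j = 0).

(* Orthogonal reduction parameterization of O(m) to e_k, here with m = p.+1,
   parameter space Theta ⊂ R^(m-1) = R^p (row vectors), family Qt. *)
Definition is_ORP (R : realType) (p : nat) (k : 'I_p.+1)
  (Theta : 'rV[R]_p -> Prop) (Qt : 'rV[R]_p -> 'M[R]_p.+1) : Prop :=
  (forall th, Theta th -> (Qt th)^T *m Qt th = 1%:M) /\
  (forall h : 'cV[R]_p.+1, h != 0 ->
     exists! th, Theta th /\ (Qt th)^T *m h = vnorm h *: unitv R k).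

(* Position of a (0-based) row/column index i of an (n+d)x(n+d) matrix inside
   the block [[mu, y^*], [x, O~]] of the embedding Q^(k0+1): index k0 maps to
   block index 0, indices n..n+d-1 map to block indices 1..d, others to None
   (identity part). *)
Definition emb_idx (n d : nat) (k0 : 'I_n) (i : 'I_(n + d)) : option 'I_d.+1 :=
  if (i == k0 :> nat) then Some ord0
  else if (n <= i)%N then Some (inord (i - n).+1) else None.

(* The embedding Q^(k0+1)(th) =
   I_{k0} ⊕ [[mu, 0, y^*], [0, I_{n-k0-1}, 0], [x, 0, O~]]  (entrywise). *)
Definition embedQ (R : realType) (n d : nat) (Qt : 'rV[R]_d -> 'M[R]_d.+1)
  (k0 : 'I_n) (th : 'rV[R]_d) : 'M[R]_(n + d) :=
  \matrix_(i < n + d, j < n + d)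
    match @emb_idx n d k0 i, @emb_idx n d k0 j with
    | Some a, Some b => Qt th a b
    | None, None => (i == j)%:R
    | _, _ => 0
    end.

(* Q^(n)(th_n) ... Q^(1)(th_1) (I_n ; 0_{d,n}), where ths k0 = th_{k0+1}. *)
Definition embProd (R : realType) (n d : nat) (Qt : 'rV[R]_d -> 'M[R]_d.+1)
  (ths : 'I_n -> 'rV[R]_d) : 'M[R]_(n + d, n) :=
  foldl (fun M k0 => embedQ Qt k0 (ths k0) *m M)
        (col_mx (1%:M : 'M[R]_n) (0 : 'M[R]_(d, n))) (enum 'I_n).

(* Main.v *)
Require Import Defs.
From HB Require Import structures.
From mathcomp Require Import all_boot all_order all_algebra.
From mathcomp Require Import all_reals zify lra.
Set Implicit Arguments. Unset Strict Implicit. Unset Printing Implicit Defensive.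
Import Order.TTheory GRing.Theory Num.Theory.
Local Open Scope ring_scope.

Section S.
Variables (R : realType) (n d : nat).

Definition sig (k0 : 'I_n) (b : 'I_d.+1) : 'I_(n + d) :=
  if unlift ord0 b is Some c then rshift n c else lshift d k0.

Lemma emb_sigE (k0 : 'I_n) (l : 'I_(n + d)) (b : 'I_d.+1) :
  (emb_idx k0 l == Some b) = (l == sig k0 b).
Proof.
have lk := ltn_ord k0; have ll := ltn_ord l.
rewrite /emb_idx /sig.
case: unliftP => [c -> | ->].
- have lc : (c < d)%N by case: c.
  apply/eqP/eqP.
  + case: ifP => [/eqP Hl|Hl].
      by case=> H0; move: H0; rewrite /bump /=.
    case: ifP => Hn // [] H0; apply: val_inj => /=; move: H0; move=> /(f_equal (@nat_of_ord _)); rewrite /= inordK /bump /=; lia.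
  + move=> ->; rewrite /=; case: ifP => [/eqP H|H]; first lia.
    rewrite leq_addr; congr Some; apply: val_inj; rewrite /= inordK /bump /= ?addKn ?add1n //; lia.
- apply/eqP/eqP.
  + case: ifP => [/eqP Hl|Hl].
      by move=> _; apply: val_inj.
    case: ifP => Hn // [] /(f_equal (@nat_of_ord _)); rewrite /= inordK; lia.
  + move=> ->; rewrite /= eqxx //.
Qed.

Lemma emb_sig (k0 : 'I_n) b : emb_idx k0 (sig k0 b) = Some b.
Proof. by apply/eqP; rewrite emb_sigE. Qed.

Lemma emb_some (k0 : 'I_n) l b : emb_idx k0 l = Some b -> l = sig k0 b.
Proof. by move/eqP; rewrite emb_sigE => /eqP. Qed.

Lemma sig_eq (k0 : 'I_n) a b : (sig k0 a == sig k0 b) = (a == b).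
Proof. by rewrite -emb_sigE emb_sig. Qed.

Definition Smx (k0 : 'I_n) : 'M[R]_(d.+1, n + d) :=
  \matrix_(b, l) (emb_idx k0 l == Some b)%:R.

Lemma StmulE k0 p (Y : 'M[R]_(d.+1, p)) i j :
  ((Smx k0)^T *m Y) i j = if emb_idx k0 i is Some a then Y a j else 0.
Proof.
rewrite !mxE; case E: (emb_idx k0 i) => [a|].
  rewrite (bigD1 a) //= !mxE E eqxx mul1r big1 ?addr0 // => b Hb.
  by rewrite !mxE E /= (inj_eq (@Some_inj _)) eq_sym (negbTE Hb) mul0r.
by apply: big1 => b _; rewrite !mxE E /= mul0r.
Qed.

Lemma mulSE k0 p (Y : 'M[R]_(p, d.+1)) i j :
  (Y *m Smx k0) i j = if emb_idx k0 j is Some b then Y i b else 0.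
Proof.
rewrite !mxE; case E: (emb_idx k0 j) => [a|].
  rewrite (bigD1 a) //= !mxE E eqxx mulr1 big1 ?addr0 // => b Hb.
  by rewrite !mxE E /= (inj_eq (@Some_inj _)) eq_sym (negbTE Hb) mulr0.
by apply: big1 => b _; rewrite !mxE E /= mulr0.
Qed.

Lemma SmulE k0 p (Y : 'M[R]_(n + d, p)) b j :
  (Smx k0 *m Y) b j = Y (sig k0 b) j.
Proof.
rewrite mxE (bigD1 (sig k0 b)) //= mxE emb_sig eqxx mul1r big1 ?addr0 // => l Hl.
by rewrite mxE emb_sigE (negbTE Hl) mul0r.
Qed.

Lemma SSt k0 : Smx k0 *m (Smx k0)^T = 1%:M.
Proof.
apply/matrixP => a b; rewrite SmulE !mxE emb_sig.
by rewrite (inj_eq (@Some_inj _)).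
Qed.

Lemma embedQE (Qt : 'rV[R]_d -> 'M[R]_d.+1) k0 th :
  embedQ Qt k0 th = 1%:M + (Smx k0)^T *m (Qt th - 1%:M) *m Smx k0.
Proof.
apply/matrixP => i j; rewrite /embedQ mxE [RHS]mxE mulSE [(1%:M) i j]mxE.
case Ei: (emb_idx k0 i) => [a|]; case Ej: (emb_idx k0 j) => [b|].
- rewrite StmulE Ei !mxE.
  rewrite (emb_some Ei) (emb_some Ej) sig_eq; lra.
- have -> : (i == j) = false.
    by apply/negbTE/eqP => Hij; move: Ei; rewrite Hij Ej.
  by rewrite addr0.
- rewrite StmulE Ei.
  have -> : (i == j) = false.
    by apply/negbTE/eqP => Hij; move: Ei; rewrite Hij Ej.
  by rewrite addr0.
- by rewrite addr0.
Qed.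

Lemma zm (V : zmodType) (x y z : V) : x - z + (y - z) + (z - y - (x - z)) = 0.
Proof. by rewrite opprB addrACA !addrA !subrK subrr. Qed.

Lemma prodI k0 (A B : 'M[R]_d.+1) : A + B + B *m A = 0 ->
  (1%:M + (Smx k0)^T *m B *m Smx k0) *m (1%:M + (Smx k0)^T *m A *m Smx k0) = 1%:M.
Proof.
move=> H; set S := Smx k0.
rewrite mulmxDl mulmxDr !mul1mx mulmxDr mulmx1.
have -> : S^T *m B *m S *m (S^T *m A *m S) = S^T *m (B *m A) *m S.
  by rewrite !mulmxA -(mulmxA (S^T *m B) S S^T) SSt mulmx1.
rewrite -addrA.
have -> : S^T *m A *m S + (S^T *m B *m S + S^T *m (B *m A) *m S)
   = S^T *m (A + B + B *m A) *m S by rewrite !mulmxDr !mulmxDl addrA.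
by rewrite H mulmx0 mul0mx addr0.
Qed.

Lemma embedQtE (Qt : 'rV[R]_d -> 'M[R]_d.+1) (k0 : 'I_n) th :
  (embedQ Qt k0 th)^T = 1%:M + (Smx k0)^T *m ((Qt th)^T - 1%:M) *m Smx k0.
Proof.
by rewrite embedQE linearD /= trmx1 !trmx_mul trmxK linearB /= trmx1 mulmxA.
Qed.

Lemma embedQ_orth (Qt : 'rV[R]_d -> 'M[R]_d.+1) (k0 : 'I_n) th :
  (Qt th)^T *m Qt th = 1%:M ->
  (embedQ Qt k0 th)^T *m embedQ Qt k0 th = 1%:M /\ embedQ Qt k0 th *m (embedQ Qt k0 th)^T = 1%:M.
Proof.
move=> HQ; have HQ' := mulmx1C HQ.
rewrite embedQtE embedQE; split; apply: prodI.
  by rewrite mulmxBl !mulmxBr HQ !mulmx1 mul1mx zm.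
by rewrite mulmxBl !mulmxBr HQ' !mulmx1 mul1mx zm.
Qed.

Lemma sig0 (k0 : 'I_n) a : ((sig k0 a : nat) == k0) = (a == ord0).
Proof.
have lk := ltn_ord k0.
rewrite /sig; case: unliftP => [c ->|->] /=; last by rewrite !eqxx.
have -> : (n + c == k0)%N = false by apply/negbTE/eqP; lia.
by rewrite eq_sym (negbTE (neq_lift _ _)).
Qed.

Definition Inv (m : nat) (M : 'M[R]_(n + d, n)) : Prop :=
  M^T *m M = 1%:M /\ (forall (i : 'I_(n + d)) (j : 'I_n), (i < j)%N -> M i j = 0) /\ (forall (i : 'I_(n + d)) (j : 'I_n), (m <= j)%N -> M i j = ((i : nat) == j)%:R).

Lemma step (Theta : 'rV[R]_d -> Prop) (Qt : 'rV[R]_d -> 'M[R]_d.+1)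
  (HO : is_ORP ord0 Theta Qt) (k0 : 'I_n) M : Inv k0.+1 M ->
  exists th, Theta th /\ Inv k0 ((embedQ Qt k0 th)^T *m M) /\ M = embedQ Qt k0 th *m ((embedQ Qt k0 th)^T *m M).
Proof.
case: HO => [HO1 HO2] [Horth [Htri Hcol]].
have lk := ltn_ord k0.
have Hsupp : forall i, emb_idx k0 i = None -> M i k0 = 0.
  move=> i; rewrite /emb_idx; case: ifP => // /negbT Hik; case: ifP => // /negbT Hni _.
  have Hni' : (i < n)%N by rewrite ltnNge.
  case: (ltngtP i k0) => [lt|gt|eq]; first exact: Htri.
  - pose i' := Ordinal Hni'.
    have := f_equal (fun X : 'M[R]_n => X i' k0) Horth; rewrite /= !mxE.
    have -> : (i' == k0) = false by apply/negbTE; rewrite -(inj_eq val_inj) /=; lia.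
    rewrite (bigD1 i) //= mxE Hcol //= eqxx mul1r big1 ?addr0 // => l Hl.
    by rewrite mxE Hcol //= (_ : (l : nat) == i = false) ?mul0r //; apply/negbTE.
  - by move: Hik; rewrite eq eqxx.
set S := Smx k0.
pose h := col k0 (S *m M).
have Hhdef : forall b, h b 0 = M (sig k0 b) k0 by move=> b; rewrite mxE SmulE.
have Hhdef2 : forall b, h b 0 = (S *m M) b k0 by move=> b; rewrite mxE.
clearbody h.
have Hh : S^T *m h = col k0 M.
  apply/matrixP => i j; rewrite (ord1 j) StmulE [RHS]mxE.
  case Ei: (emb_idx k0 i) => [a|]; first by rewrite Hhdef (emb_some Ei).
  by rewrite Hsupp.
have hh : h^T *m h = 1%:M.
  have -> : h^T *m h = (S^T *m h)^T *m (S^T *m h).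
    by rewrite trmx_mul trmxK mulmxA -(mulmxA h^T S) SSt mulmx1.
  rewrite Hh; apply/matrixP => i j; rewrite (ord1 i) (ord1 j).
  have := f_equal (fun X : 'M[R]_n => X k0 k0) Horth; rewrite /= !mxE !eqxx => <-.
  by apply: eq_bigr => l _; rewrite !mxE.
have hn : vnorm h = 1.
  rewrite /vnorm; have := f_equal (fun X : 'M[R]_1 => X 0 0) hh.
  rewrite /= [X in X = _ -> _]mxE [X in _ = X -> _]mxE /= => E.
  rewrite (_ : \sum_(i < d.+1) _ = 1) ?sqrtr1 //.
  rewrite -[RHS]E.
  by apply: eq_bigr => b _; rewrite mxE expr2.
have hnz : h != 0.
  apply/eqP => h0; move: hh; rewrite h0 mulmx0 => /matrixP /(_ 0 0).
  by rewrite !mxE /= => /eqP; rewrite eq_sym oner_eq0.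
have [th [[Tth Hth] _]] := HO2 h hnz.
rewrite hn scale1r in Hth.
exists th; split => //.
have [EtE EEt] := embedQ_orth k0 (HO1 th Tth).
split; last by rewrite mulmxA EEt mul1mx.
set E := embedQ Qt k0 th.
have M'E : forall i j, (E^T *m M) i j = M i j +
    (if emb_idx k0 i is Some a then (((Qt th)^T - 1%:M) *m (S *m M)) a j else 0).
  move=> i j; rewrite /E embedQtE mulmxDl mul1mx -!mulmxA mxE StmulE //.
have Hc : forall i (j : 'I_n), (k0 <= j)%N -> (E^T *m M) i j = ((i : nat) == j)%:R.
  move=> i j; rewrite leq_eqVlt => /orP [/eqP ej | ltj].
  + have -> : j = k0 by apply: val_inj.
    rewrite M'E; case Ei: (emb_idx k0 i) => [a|].
    * have -> : (((Qt th)^T - 1%:M) *m (S *m M)) a k0 = (unitv R ord0) a 0 - h a 0.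
        transitivity ((((Qt th)^T - 1%:M) *m h) a 0).
          by rewrite [LHS]mxE [RHS]mxE; apply: eq_bigr => b _; rewrite Hhdef2.
        by rewrite mulmxBl mul1mx Hth !mxE.
      rewrite (emb_some Ei) Hhdef addrC subrK /unitv mxE.
      by rewrite sig0.
    * have Hik : (i : nat) != k0 by move: Ei; rewrite /emb_idx; case: ifP.
      by rewrite Hsupp // addr0 (negbTE Hik).
  + rewrite M'E.
    have -> : (if emb_idx k0 i is Some a then (((Qt th)^T - 1%:M) *m (S *m M)) a j else 0) = 0.
      case: (emb_idx k0 i) => // a; rewrite mxE big1 // => b _.
      rewrite SmulE Hcol //.
      have -> : ((sig k0 b : nat) == j) = false.
        have lj := ltn_ord j.
        by rewrite /sig; case: unliftP => [c _|_] /=; apply/negbTE/eqP; lia.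
      by rewrite mulr0.
    by rewrite addr0 Hcol.
split.
  by rewrite trmx_mul trmxK -mulmxA (mulmxA E) EEt mul1mx.
split; last exact: Hc.
move=> i j lij; case: (leqP k0 j) => Hkj.
  by rewrite Hc // ltn_eqF.
rewrite M'E.
have -> : emb_idx k0 i = None.
  rewrite /emb_idx ifF; last by apply/negbTE/eqP; lia.
  by rewrite ifF //; apply/negbTE; rewrite -ltnNge; have := ltn_ord j; lia.
by rewrite addr0 Htri.
Qed.

Definition fstep (Qt : 'rV[R]_d -> 'M[R]_d.+1) (ths : 'I_n -> 'rV[R]_d) :=
  fun (M : 'M[R]_(n + d, n)) (k0 : 'I_n) => embedQ Qt k0 (ths k0) *m M.

Lemma F_eq Qt ths ths' (s : seq 'I_n) M0 : {in s, ths =1 ths'} ->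
  foldl (fstep Qt ths) M0 s = foldl (fstep Qt ths') M0 s.
Proof.
elim: s M0 => //= k s IH M0 H.
have -> : fstep Qt ths M0 k = fstep Qt ths' M0 k by rewrite /fstep H ?mem_head.
by apply: IH => x xs; apply: H; rewrite in_cons xs orbT.
Qed.

Lemma take_lt m (k : 'I_n) : k \in take m (enum 'I_n) -> (k < m)%N.
Proof.
move=> /index_ltn; suff -> : index k (enum 'I_n) = k by [].
have Hi : (index k (enum 'I_n) < n)%N by have := index_mem k (enum 'I_n); rewrite size_enum_ord mem_enum => ->.
by rewrite -{2}(nth_index k (mem_enum _ k)) nth_enum_ord.
Qed.

Lemma ind (Theta : 'rV[R]_d -> Prop) (Qt : 'rV[R]_d -> 'M[R]_d.+1)
  (HO : is_ORP ord0 Theta Qt) th0 (Tth0 : Theta th0) :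
  forall m, (m <= n)%N -> forall M, Inv m M ->
  exists ths, (forall k, Theta (ths k)) /\
    M = foldl (fstep Qt ths) (col_mx (1%:M : 'M[R]_n) (0 : 'M[R]_(d, n))) (take m (enum 'I_n)).
Proof.
elim=> [|m IH] Hm M HM.
  exists (fun _ => th0); split => //; rewrite take0 /=.
  apply/matrixP => i j; rewrite (proj2 (proj2 HM)) // -(splitK i).
  case: split => [a|b] /=; first by rewrite col_mxEu mxE.
  rewrite col_mxEd mxE; have := ltn_ord j.
  by case: eqP => //= <-; rewrite ltnNge leq_addr.
pose k0 : 'I_n := Ordinal Hm.
have [th [Tth [HM' Heq]]] := step HO (M := M) (k0 := k0) HM.
have [ths' [Tths' Heq']] := IH (ltnW Hm) _ HM'.
exists (fun k => if k == k0 then th else ths' k); split.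
  by move=> k; case: eqP.
have Hn : nth k0 (enum 'I_n) m = k0 by apply: val_inj; rewrite /= nth_enum_ord.
rewrite (take_nth k0) ?size_enum_ord // foldl_rcons Hn {1}/fstep eqxx.
rewrite {1}Heq Heq'; congr (_ *m _); apply: F_eq => k /take_lt Hk.
rewrite ifF //; apply/negbTE; rewrite -(inj_eq val_inj) /=; lia.
Qed.
End S.


Theorem theorem6p1 (R : realType) (n d : nat) (Hd1 : (1 <= d)%N) (Hdn : (d <= n)%N)
  (A : 'M[R]_n) (C : 'M[R]_(d, n)) (Theta : 'rV[R]_d -> Prop)
  (Qt : 'rV[R]_d -> 'M[R]_d.+1) :
  OTSON A C -> is_ORP ord0 Theta Qt ->
  exists ths : 'I_n -> 'rV[R]_d,
    (forall k, Theta (ths k)) /\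
    castmx (addnC d n, erefl n) (col_mx C A) = embProd Qt ths.
Proof.
move=> [HA HT] HO.
have Hu : unitv R (ord0 : 'I_d.+1) != 0.
  apply/eqP => /matrixP /(_ ord0 0); rewrite !mxE eqxx /=.
  by move/eqP; rewrite oner_eq0.
have [th0 [[Tth0 _] _]] := proj2 HO _ Hu.
set X := col_mx C A.
have HX : X^T *m X = 1%:M by rewrite tr_col_mx mul_row_col addrC HA subrK.
have HI : Inv n (castmx (addnC d n, erefl n) X).
  split; [|split].
  - rewrite -HX; apply/matrixP => i j; rewrite !mxE.
    rewrite (reindex (cast_ord (addnC d n))) /=; last first.
      by exists (cast_ord (esym (addnC d n))) => l _; rewrite ?cast_ordK ?cast_ordKV.
    by apply: eq_bigr => l _; rewrite [X in X * _]mxE [X^T i l]mxE !castmxE /= cast_ordK !cast_ord_id.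

  - move=> i j lij; rewrite castmxE; apply: HT => /=; exact: lij.
  - by move=> i j; rewrite leqNgt ltn_ord.
have [ths [Tths Heq]] := ind HO Tth0 (leqnn n) HI.
exists ths; split => //.
rewrite Heq /embProd take_oversize // size_enum_ord //.
Qed.
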